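(* Let $E$ be a finite environment with state set $S$, and let $\Sigma$ be a nonempty set of group strategies for $E$ that is restrictable and extendable. Then for every state $s\in S$ and every ATEL formula $\phi$: $E,s\models^\Sigma\phi$ iff for all points $(r,m)$ of $\mathcal I(E[S/I],\mathrm{comp}(\Sigma))$ with $r_e(m)=s$ we have $\mathcal I(E[S/I],\mathrm{comp}(\Sigma)),(r,m)\models\phi^*$; moreover, ''for all points'' may equivalently be replaced by ''for some point'' here (and such points exist).
   Context: Environments. Fix a finite set $Prop$ of atomic propositions and a finite set $Ags$ of agents. An environment is a tuple $E=\langle S,I,\{Act_i\}_{i\in Ags},\rightarrow,\{O_i\}_{i\in Ags},\pi\rangle$ where $S$ is a finite set of states, $I\subseteq S$ initial states, each $Act_i$ a finite nonempty action set, $Act=\prod_{i}Act_i$, $\rightarrow\subseteq S\times Act\times S$ serial (for all $s,a$ there is $t$ with $(s,a,t)\in\rightarrow$), $O_i:S\to L_i$ observation functions, $\pi:S\to 2^{Prop}$. $E[S/I]$ denotes $E$ with the set of initial states replaced by $S$. For states, $s\sim_i t$ iff $O_i(s)=O_i(t)$. Strategies. A strategy for agent $i$ is $\alpha_i:S\to 2^{Act_i}\setminus\{\emptyset\}$. A strategy for a group $G\subseteq Ags$ is a tuple $\alpha_G=(\alpha_i)_{i\in G}$; for $G=Ags$ it is a joint strategy. For $G'\subseteq G$, $(\alpha_G)_{G'}$ is the restriction to $G'$. The completion $\mathrm{comp}(\alpha_G)$ is the joint strategy agreeing with $\alpha_G$ on $G$ and with $\alpha_i(s)=Act_i$ for all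 $i\notin G$, $s\in S$; $\mathrm{comp}(\Sigma)=\{\mathrm{comp}(\alpha):\alpha\in\Sigma\}$. A set $\Sigma$ of group strategies (each for some group) is restrictable if for every $\alpha\in\Sigma$ for group $G$ and every $G'\subseteq G$, $\alpha_{G'}\in\Sigma$; it is extendable if for every strategy $\beta\in\Sigma$ for a group $G'$ and every $G\supseteq G'$ there exists $\alpha\in\Sigma$ for group $G$ with $\alpha_{G'}=\beta$. ATEL. Formulas: $\phi::=p\mid\neg\phi\mid\phi_1\lor\phi_2\mid\langle\langle G\rangle\rangle X\phi\mid\langle\langle G\rangle\rangle\Box\phi\mid\langle\langle G\rangle\rangle(\phi_1U\phi_2)\mid K_i\phi\mid D_G\phi\mid C_G\phi$ with $G\subseteq Ags$. A path is $\rho:\mathbb N\to S$ with, for each $k$, $(\rho(k),a,\rho(k+1))\in\rightarrow$ for some $a$; it is from $s$ if $\rho(0)=s$; it is consistent with a $G$-strategy $\alpha_G$ if for each $k$ there is $a$ with $(\rho(k),a,\rho(k+1))\in\rightarrow$ and $a_i\in\alpha_i(\rho(k))$ for all $i\in G$. Semantics $E,s\models^\Sigma\phi$: $p$ iff $p\in\pi(s)$; Boolean as usual; $\langle\langle G\rangle\rangle X\phi$ iff there is a $G$-strategy $\alpha_G\in\Sigma$ such that all paths $\rho$ from $s$ consistent with $\alpha_G$ satisfy $E,\rho(1)\models^\Sigma\phi$; $\langle\langle G\rangle\rangle\Box\phi$ iff there is such $\alpha_G\in\Sigma$ with $E,\rho(k)\models^\Sigma\phi$ for all $k$ on all such paths;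 $\langle\langle G\rangle\rangle(\phi U\psi)$ iff there is such $\alpha_G\in\Sigma$ such that on all such paths some $m$ has $E,\rho(m)\models^\Sigma\psi$ and $E,\rho(k)\models^\Sigma\phi$ for $k<m$; $K_i\phi$ iff $\phi$ holds at all $t$ with $t\sim_i s$; $D_G\phi$ iff $\phi$ holds at all $t$ with $(s,t)\in\bigcap_{i\in G}\sim_i$; $C_G\phi$ iff $\phi$ holds at all $t$ with $(s,t)\in(\bigcup_{i\in G}\sim_i)^*$. Strategy space. Given $E$ and a set $\Sigma'$ of joint strategies, $\mathcal I(E,\Sigma')$ is the set of runs $r:\mathbb N\to$ global states, each global state having components indexed by $e$ (a state of $S$), $i\in Ags$ (an element of $L_i$), and $\sigma(i)$ (a strategy of agent $i$), such that for all $m$, $i$: $r_e(0)\in I$ and $(r_{\sigma(i)}(0))_i\in\Sigma'$; $r_i(m)=O_i(r_e(m))$; $(r_e(m),a,r_e(m+1))\in\rightarrow$ for some $a$ with $a_j\in r_{\sigma(j)}(m)(r_e(m))$ for all $j$; $r_{\sigma(i)}(m+1)=r_{\sigma(i)}(m)$; with $\pi'(r,m)=\pi(r_e(m))$. Points are $(r,m)$; $(r,m)\sim_j(r',m')$ iff $r_j(m)=r'_j(m')$ for $j\in\{e\}\cup Ags\cup\sigma(Ags)$. Target logic $\mathrm{CTL^*K}(\{e\}\cup Ags\cup\sigma(Ags),Prop)$: formulas $p,\neg,\lor,A,X,U,D_G,C_G$ with $G\subseteq\{e\}\cup Ags\cup\sigma(Ags)$, interpreted at points: $A\psi$ iff $\psi$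 holds at $(r',m)$ for all runs $r'$ agreeing with $r$ up to $m$; $X,U$ as in LTL along $r$; $D_G\psi$ iff $\psi$ holds at all $(r',m')$ with $(r,m)\sim_j(r',m')$ for all $j\in G$ (all points if $G=\emptyset$); $C_G\psi$ iff $\psi$ holds at all points reachable by finitely many $\sim_j$ steps, $j\in G$. $K_j=D_{\{j\}}$, $\Box\psi=\neg(\mathit{true}\,U\neg\psi)$. Translation $\phi^*$: $p^*=p$, $(\neg\phi)^*=\neg\phi^*$, $(\phi_1\wedge\phi_2)^*=\phi_1^*\wedge\phi_2^*$, $(K_i\phi)^*=K_i\phi^*$, $(D_G\phi)^*=D_G\phi^*$, $(C_G\phi)^*=C_G\phi^*$, $(\langle\langle G\rangle\rangle X\phi)^*=\neg K_e\neg D_{\{e\}\cup\sigma(G)}X\phi^*$, $(\langle\langle G\rangle\rangle\Box\phi)^*=\neg K_e\neg D_{\{e\}\cup\sigma(G)}\Box\phi^*$, $(\langle\langle G\rangle\rangle(\phi_1U\phi_2))^*=\neg K_e\neg D_{\{e\}\cup\sigma(G)}(\phi_1^*U\phi_2^* )$. *)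

(* Defs.v *)
From Stdlib Require Import Relations.
From HB Require Import structures.
From mathcomp Require Import all_boot.
Set Implicit Arguments. Unset Strict Implicit. Unset Printing Implicit Defensive.

Record env (Ag Pr : finType) := Env {
  St : finType;
  Init : St -> Prop;
  Act : Ag -> finType;
  Act_ne : forall i, inhabited (Act i);
  Trans : St -> (forall i, Act i) -> St -> Prop;
  Trans_serial : forall s a, exists t, Trans s a t;
  Obs : Ag -> Type;
  obs : forall i, St -> Obs i;
  lab : St -> Pr -> bool
}.

Section Defs.
Variables (Ag Pr : finType).

Definition with_init (E : env Ag Pr) (I' : St E -> Prop) : env Ag Pr :=
  @Env Ag Pr (St E) I' (@Act _ _ E) (@Act_ne _ _ E) (@Trans _ _ E)
       (@Trans_serial _ _ E) (@Obs _ _ E) (@obs _ _ E) (@lab _ _ E).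

(* an agent strategy alpha_i : S -> 2^{Act_i}, as a characteristic function *)
Definition astrat (E : env Ag Pr) (i : Ag) := St E -> Act E i -> bool.
Definition astrat_ok (E : env Ag Pr) (i : Ag) (f : astrat E i) :=
  forall s, exists a, f s a.

(* a group strategy: a partial tuple; the group is the set of agents i with
   a component (Some _) *)
Definition gstrat (E : env Ag Pr) := forall i : Ag, option (astrat E i).
Definition grp (E : env Ag Pr) (al : gstrat E) : {set Ag} :=
  [set i | isSome (al i)].
Definition gstrat_ok (E : env Ag Pr) (al : gstrat E) :=
  forall i f, al i = Some f -> astrat_ok f.

Definition restrict (E : env Ag Pr) (al : gstrat E) (G' : {set Ag}) : gstrat E :=
  fun i => if i \in G' then al i else None.

Definition jstrat (E : env Ag Pr) := forall i : Ag, astrat E i.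
Definition comp (E : env Ag Pr) (al : gstrat E) : jstrat E :=
  fun i => match al i with Some f => f | None => fun _ _ => true end.
Definition compSet (E : env Ag Pr) (Sigma : gstrat E -> Prop) : jstrat E -> Prop :=
  fun be => exists al, Sigma al /\ comp al = be.

Definition restrictable (E : env Ag Pr) (Sigma : gstrat E -> Prop) :=
  forall al, Sigma al -> forall G' : {set Ag}, G' \subset grp al -> Sigma (restrict al G').
Definition extendable (E : env Ag Pr) (Sigma : gstrat E -> Prop) :=
  forall be, Sigma be -> forall G : {set Ag}, grp be \subset G ->
    exists al, Sigma al /\ grp al = G /\ restrict al (grp be) = be.

Definition consistent (E : env Ag Pr) (al : gstrat E) (rho : nat -> St E) :=
  forall k, exists a, Trans (rho k) a (rho k.+1) /\
    forall i f, al i = Some f -> f (rho k) (a i).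

Inductive atel :=
  | AP (p : Pr)
  | ANeg (f : atel)
  | AOr (f g : atel)
  | ACX (G : {set Ag}) (f : atel)
  | ACG (G : {set Ag}) (f : atel)
  | ACU (G : {set Ag}) (f g : atel)
  | AK (i : Ag) (f : atel)
  | AD (G : {set Ag}) (f : atel)
  | AC (G : {set Ag}) (f : atel).

Fixpoint asat (E : env Ag Pr) (Sigma : gstrat E -> Prop) (phi : atel)
  (s : St E) : Prop :=
  match phi with
  | AP p => lab s p
  | ANeg f => ~ asat Sigma f s
  | AOr f g => asat Sigma f s \/ asat Sigma g s
  | ACX G f => exists al, Sigma al /\ grp al = G /\
      forall rho, rho 0 = s -> consistent al rho -> asat Sigma f (rho 1)
  | ACG G f => exists al, Sigma al /\ grp al = G /\
      forall rho, rho 0 = s -> consistent al rho -> forall k, asat Sigma f (rho k)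
  | ACU G f g => exists al, Sigma al /\ grp al = G /\
      forall rho, rho 0 = s -> consistent al rho ->
        exists m, asat Sigma g (rho m) /\ forall k, k < m -> asat Sigma f (rho k)
  | AK i f => forall t, obs i s = obs i t -> asat Sigma f t
  | AD G f => forall t, (forall i, i \in G -> obs i s = obs i t) -> asat Sigma f t
  | AC G f => forall t,
      clos_refl_trans (St E) (fun u v => exists i, i \in G /\ obs i u = obs i v) s t ->
      asat Sigma f t
  end.

Record gstate (E : env Ag Pr) := GS {
  g_e : St E;
  g_l : forall i, Obs E i;
  g_s : jstrat E
}.
Arguments g_s {E}.
Arguments g_l {E}.
Arguments g_e {E}.
Definition run (E : env Ag Pr) := nat -> gstate E.

Definition is_run (E : env Ag Pr) (Sigma' : jstrat E -> Prop) (r : run E) : Prop :=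
  Init (g_e (r 0)) /\ Sigma' (g_s (r 0)) /\
  forall m,
    (forall i : Ag, g_l (r m) i = obs i (g_e (r m))) /\
    (exists a, Trans (g_e (r m)) a (g_e (r m.+1)) /\
        forall j : Ag, g_s (r m) j (g_e (r m)) (a j)) /\
    (forall i : Ag, g_s (r m.+1) i = g_s (r m) i).

Definition stratspace (E : env Ag Pr) (Sigma : gstrat E -> Prop) : run (@with_init E (fun _ => True)) -> Prop :=
  @is_run (@with_init E (fun _ => True)) (compSet Sigma).

Inductive tidx := ix_e | ix_a (i : Ag) | ix_s (i : Ag).

Definition eqloc (E : env Ag Pr) (j : tidx) (g g' : gstate E) : Prop :=
  match j with
  | ix_e => g_e g = g_e g'
  | ix_a i => g_l g i = g_l g' i
  | ix_s i => g_s g i = g_s g' i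
  end.

Inductive tform :=
  | TP (p : Pr)
  | TTrue
  | TNeg (f : tform)
  | TOr (f g : tform)
  | TA (f : tform)
  | TX (f : tform)
  | TU (f g : tform)
  | TD (G : tidx -> Prop) (f : tform)
  | TC (G : tidx -> Prop) (f : tform).

Fixpoint tsat (E : env Ag Pr) (sys : run E -> Prop) (phi : tform)
  (r : run E) (m : nat) : Prop :=
  match phi with
  | TP p => lab (g_e (r m)) p
  | TTrue => True
  | TNeg f => ~ tsat sys f r m
  | TOr f g => tsat sys f r m \/ tsat sys g r m
  | TA f => forall r', sys r' -> (forall k, k <= m -> r' k = r k) -> tsat sys f r' m
  | TX f => tsat sys f r m.+1
  | TU f g => exists m', m <= m' /\ tsat sys g r m' /\
      forall k, m <= k < m' -> tsat sys f r k
  | TD G f => forall r' m', sys r' ->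
      (forall j, G j -> eqloc j (r m) (r' m')) -> tsat sys f r' m'
  | TC G f => forall r' m', sys r' ->
      clos_refl_trans (run E * nat)
        (fun x y => sys y.1 /\ exists j, G j /\ eqloc j (x.1 x.2) (y.1 y.2))
        (r, m) (r', m') ->
      tsat sys f r' m'
  end.

Definition tK (j : tidx) (f : tform) := TD (fun x => x = j) f.
Definition tBox (f : tform) := TNeg (TU TTrue (TNeg f)).
Definition agents_of (G : {set Ag}) : tidx -> Prop :=
  fun x => match x with ix_a i => i \in G | _ => False end.
Definition e_sig (G : {set Ag}) : tidx -> Prop :=
  fun x => match x with ix_e => True | ix_s i => i \in G | ix_a _ => False end.

Fixpoint transl (phi : atel) : tform :=
  match phi with
  | AP p => TP p
  | ANeg f => TNeg (transl f)
  | AOr f g => TOr (transl f) (transl g)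
  | ACX G f => TNeg (tK ix_e (TNeg (TD (e_sig G) (TX (transl f)))))
  | ACG G f => TNeg (tK ix_e (TNeg (TD (e_sig G) (tBox (transl f)))))
  | ACU G f g => TNeg (tK ix_e (TNeg (TD (e_sig G) (TU (transl f) (transl g)))))
  | AK i f => tK (ix_a i) (transl f)
  | AD G f => TD (agents_of G) (transl f)
  | AC G f => TC (agents_of G) (transl f)
  end.

End Defs.

(* Main.v *)
Require Import Defs.
From HB Require Import structures.
From mathcomp Require Import all_boot.
From mathcomp Require Import zify.
From Stdlib Require Import Classical ClassicalEpsilon Relations.
Set Implicit Arguments. Unset Strict Implicit. Unset Printing Implicit Defensive.

Arguments g_s {Ag Pr E} g i _ _.
Notation cmp al j := (@Defs.comp _ _ _ al j).
Notation WE E := (@with_init _ _ E (fun _ => True)).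

Lemma run_props (Ag Pr : finType) (E : env Ag Pr) (Sigma : gstrat E -> Prop)
  (r : run (WE E)) :
  stratspace Sigma r ->
  (forall n i, g_s (r n) i = g_s (r 0) i) /\
  (forall n i, g_l (r n) i = obs i (g_e (r n))) /\
  (forall n, exists a, Trans (g_e (r n)) a (g_e (r n.+1)) /\
      forall j, g_s (r 0) j (g_e (r n)) (a j)) /\
  compSet Sigma (g_s (r 0)).
Proof.
case=> _ [Hs Hr].
have Hc : forall n i, g_s (r n) i = g_s (r 0) i.
  elim=> [//|n IH] i. by rewrite (proj2 (proj2 (Hr n))) IH.
split; first exact: Hc.
split; first by move=> n i; exact: (proj1 (Hr n)).
split=> // n. case: (proj1 (proj2 (Hr n))) => a [Ht Ha]. exists a; split=> // j.
by rewrite -(Hc n).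
Qed.

Lemma run_of_path Ag Pr (E : env Ag Pr) (Sigma : gstrat E -> Prop) al
  (rho : nat -> St E) :
  Sigma al ->
  (forall k, exists a, Trans (rho k) a (rho k.+1) /\ forall j, cmp al j (rho k) (a j)) ->
  stratspace Sigma (fun k => @GS _ _ (WE E) (rho k) (fun i => obs i (rho k)) (Defs.comp al)).
Proof.
move=> HS Hc; split=> //; split; first by exists al.
move=> m; split=> //; split=> //; exact: Hc.
Qed.

Lemma path_ex Ag Pr (E : env Ag Pr) (al : gstrat E) :
  gstrat_ok al -> forall t, exists rho : nat -> St E, rho 0 = t /\
  forall k, exists a, Trans (rho k) a (rho k.+1) /\ forall j, cmp al j (rho k) (a j).
Proof.
move=> Hok t.
have Hact : forall u j, exists x, cmp al j u x.
  move=> u j; rewrite /Defs.comp; case E1: (al j) => [f|].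
  - by case: (Hok j f E1 u) => x Hx; exists x.
  - by case: (@Act_ne _ _ E j) => x; exists x.
have Hstep : forall u, exists v, exists a, Trans u a v /\ forall j, cmp al j u (a j).
  move=> u.
  pose a := fun j => proj1_sig (constructive_indefinite_description _ (Hact u j)).
  case: (Trans_serial u a) => v Hv; exists v, a; split=> // j.
  exact: (proj2_sig (constructive_indefinite_description _ (Hact u j))).
pose next := fun u => proj1_sig (constructive_indefinite_description _ (Hstep u)).
exists (fun k => iter k next t); split=> // k.
rewrite iterS.
exact: (proj2_sig (constructive_indefinite_description _ (Hstep (iter k next t)))).
Qed.

Lemma point_ex Ag Pr (E : env Ag Pr) (Sigma : gstrat E -> Prop) al :
  gstrat_ok al -> Sigma al -> forall t : St E, exists r : run (WE E),
   stratspace Sigma r /\ g_e (r 0) = t /\ g_s (r 0) = Defs.comp al.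
Proof.
move=> Hok HS t; case: (path_ex Hok t) => rho [H0 Hr].
exists (fun k => @GS _ _ (WE E) (rho k) (fun i => obs i (rho k)) (Defs.comp al)).
split; first exact: run_of_path HS Hr. by split.
Qed.

Lemma strat_case Ag Pr (E : env Ag Pr) (Sigma : gstrat E -> Prop)
  (Sigma_ok : forall al, Sigma al -> gstrat_ok al)
  (Sigma_restr : restrictable Sigma) (Sigma_ext : extendable Sigma)
  (G : {set Ag}) (X : tform Ag Pr) (Psi : (nat -> St E) -> Prop) :
  (forall r m, stratspace Sigma r ->
     (tsat (stratspace Sigma) X r m <-> Psi (fun k => g_e (r (m + k))))) ->
  forall r m, stratspace Sigma r ->
  (tsat (stratspace Sigma) (TNeg (tK (@ix_e Ag) (TNeg (TD (e_sig G) X)))) r m <->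
   exists al, Sigma al /\ grp al = G /\
     forall rho, rho 0 = g_e (r m) -> consistent al rho -> Psi rho).
Proof.
move=> Hlink r m Hr; split.
- move=> H. apply: NNPP => Hno. apply: H => r' m' Hr' He HD.
  have He' : g_e (r m) = g_e (r' m') := He (@ix_e Ag) erefl.
  case: (run_props Hr') => Hc [_ [Hst Hcs]].
  case: Hcs => al0 [HS0 Hal0].
  pose al2 := restrict al0 (G :&: grp al0).
  have HS2 : Sigma al2 by apply: Sigma_restr => //; exact: subsetIr.
  case: (Sigma_ext al2 HS2 G _) => [|al [HS [HG Hres]]].
    apply/subsetP => i; rewrite !inE /al2 /restrict inE; case: ifP => [/andP[]|] //.
  apply: Hno; exists al; split=> //; split=> // rho H0 Hcons.
  have Hcons2 : forall k, exists a, Trans (rho k) a (rho k.+1) /\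
      forall j, cmp al2 j (rho k) (a j).
    move=> k; case: (Hcons k) => a [Ht Hf]; exists a; split=> // j.
    rewrite /Defs.comp; case Ej: (al2 j) => [f|] //.
    apply: Hf. have := f_equal (fun h : gstrat E => h j) Hres.
    rewrite /= /restrict.
    have -> : j \in grp al2 by rewrite inE Ej.
    by move=> ->.
  have Hr2 := run_of_path HS2 Hcons2.
  apply: (proj1 (Hlink _ 0 Hr2)).
  apply: HD => //.
  case=> [|i|i] //=.
  + by rewrite -He' H0.
  + move=> Hi. rewrite Hc -Hal0 /Defs.comp /al2 /restrict inE.
    case E0: (al0 i) => [f|] /=; rewrite ?Hi ?E0 /=; last by case: ifP.
    by rewrite inE E0.
- case=> al [HS [HG Hal]] Hn.
  case: (point_ex (Sigma_ok _ HS) HS (g_e (r m))) => r' [Hr' [He' Hs']].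
  apply: (Hn r' 0 Hr') => [j -> //|].
  move=> r'' m'' Hr'' Heq. apply: (proj2 (Hlink r'' m'' Hr'')). apply: Hal.
  + by rewrite /= addn0 -(Heq (@ix_e Ag) I) He'.
  + move=> k. case: (run_props Hr'') => Hc [_ [Hst _]].
    case: (Hst (m''+k)) => a [Ht Ha]. exists a; split; first by rewrite /= addnS.
    move=> i f Hi. have HiG : i \in G by rewrite -HG inE Hi.
    have := Heq (ix_s i) HiG; rewrite /= Hs' /Defs.comp Hi => ->.
    by rewrite Hc; exact: Ha.
Qed.

Lemma reach_st Ag Pr (E : env Ag Pr) (Sigma : gstrat E -> Prop) (G : {set Ag}) x y :
  clos_refl_trans (run (WE E) * nat)
    (fun x y => stratspace Sigma y.1 /\ exists j, agents_of G j /\ eqloc j (x.1 x.2) (y.1 y.2)) x y ->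
  stratspace Sigma x.1 ->
  clos_refl_trans (St E) (fun u v => exists i, i \in G /\ obs i u = obs i v)
    (g_e (x.1 x.2)) (g_e (y.1 y.2)).
Proof.
move/clos_rt_rt1n_iff; elim=> [x0|x0 y0 z0 [Hy [j [Hj Heq]]] _ IH] Hx.
- exact: rt_refl.
- apply: rt_trans (IH Hy). apply: rt_step. case: j Hj Heq => //= i Hi Heq.
  exists i; split=> //.
  case: (run_props Hx) => _ [Hl _]; case: (run_props Hy) => _ [Hl' _].
  by rewrite -Hl -Hl'.
Qed.

Lemma reach_pt Ag Pr (E : env Ag Pr) (Sigma : gstrat E -> Prop) (G : {set Ag})
  (Hpt : forall t : St E, exists r : run (WE E), stratspace Sigma r /\ g_e (r 0) = t)
  (u v : St E) :
  clos_refl_trans (St E) (fun u v => exists i, i \in G /\ obs i u = obs i v) u v ->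
  forall (r : run (WE E)) m, stratspace Sigma r -> g_e (r m) = u ->
  exists r' m', stratspace Sigma r' /\ g_e (r' m') = v /\
   clos_refl_trans (run (WE E) * nat)
    (fun x y => stratspace Sigma y.1 /\ exists j, agents_of G j /\ eqloc j (x.1 x.2) (y.1 y.2))
    (r, m) (r', m').
Proof.
move/clos_rt_rt1n_iff; elim=> [u0|u0 w0 v0 [i [Hi Hob]] _ IH] r m Hr Hu.
- exists r, m; do 2 split => //; exact: rt_refl.
- case: (Hpt w0) => r1 [Hr1 Hw]. case: (IH r1 0 Hr1 Hw) => r' [m' [Hr' [Hv Hc]]].
  exists r', m'; do 2 split => //. apply: rt_trans Hc. apply: rt_step. split=> //.
  exists (ix_a i); split=> //=.
  case: (run_props Hr) => _ [Hl _]; case: (run_props Hr1) => _ [Hl1 _].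
  by rewrite Hl Hl1 Hu Hw.
Qed.

Lemma key Ag Pr (E : env Ag Pr) (Sigma : gstrat E -> Prop)
  (Sigma_ok : forall al, Sigma al -> gstrat_ok al)
  (Sigma_ne : exists al, Sigma al)
  (Sigma_restr : restrictable Sigma) (Sigma_ext : extendable Sigma) :
  forall (phi : atel Ag Pr) (r : run (WE E)) m, stratspace Sigma r ->
   (tsat (stratspace Sigma) (transl phi) r m <-> asat Sigma phi (g_e (r m))).
Proof.
have Hpt : forall t : St E, exists r : run (WE E), stratspace Sigma r /\ g_e (r 0) = t.
  move=> t; case: Sigma_ne => al HS; case: (point_ex (Sigma_ok _ HS) HS t) => r [? [? _]].
  by exists r.
elim=> [p|f IH|f IHf g IHg|G f IH|G f IH|G f IHf g IHg|i f IH|G f IH|G f IH] r m Hr.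
- done.
- split=> H H'; apply: H; exact/IH.
- split=> [[H|H]|[H|H]]; [left|right|left|right]; first [exact/IHf | exact/IHg].
- apply: (@strat_case _ _ E Sigma Sigma_ok Sigma_restr Sigma_ext G (TX (transl f))
           (fun rho => asat Sigma f (rho 1))) => // r' m' Hr' /=.
  rewrite addn1; exact: IH.
- apply: (@strat_case _ _ E Sigma Sigma_ok Sigma_restr Sigma_ext G (tBox (transl f))
           (fun rho => forall k, asat Sigma f (rho k))) => // r' m' Hr' /=.
  split=> H.
  + move=> k; apply/IH => //; apply: NNPP => Hn; apply: H; exists (m'+k).
    split; [exact: leq_addr | split=> //].
  + case=> m2 [Hm2 [Hn _]]; apply: Hn; apply/IH => //; have := H (m2 - m').
    by rewrite subnKC.
- apply: (@strat_case _ _ E Sigma Sigma_ok Sigma_restr Sigma_ext G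
           (TU (transl f) (transl g))
           (fun rho => exists n, asat Sigma g (rho n) /\
                        forall k, k < n -> asat Sigma f (rho k))) => // r' m' Hr' /=.
  split.
  + case=> m2 [Hm2 [Hg Hf]]; exists (m2 - m'); split.
    * rewrite subnKC //; exact/IHg.
    * move=> k Hk; apply/IHf => //; apply: Hf; apply/andP; split; lia.
  + case=> n [Hg Hf]; exists (m' + n); split; first exact: leq_addr.
    split; first exact/IHg.
    move=> k /andP[Hk1 Hk2]; apply/IHf => //; rewrite -(subnKC Hk1); apply: Hf; lia.
- case: (run_props Hr) => _ [Hl _].
  split=> H.
  + move=> t Ht; case: (Hpt t) => r' [Hr' Ht0]. rewrite -Ht0; apply/IH => //. apply: H => // j ->.
    rewrite /= Hl Ht -Ht0. by case: (run_props Hr') => _ [-> _].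
  + move=> r' m' Hr' Hj. apply/IH => //; apply: H. have := Hj _ erefl; rewrite /= Hl.
    by case: (run_props Hr') => _ [-> _].
- case: (run_props Hr) => _ [Hl _].
  split=> H.
  + move=> t Ht; case: (Hpt t) => r' [Hr' Ht0]. rewrite -Ht0; apply/IH => //. apply: H => //.
    case=> //= i Hi. rewrite Hl (Ht i Hi) -Ht0. by case: (run_props Hr') => _ [-> _].
  + move=> r' m' Hr' Hj. apply/IH => //; apply: H => i Hi.
    have := Hj (ix_a i) Hi; rewrite /= Hl.
    by case: (run_props Hr') => _ [-> _].
- split=> H.
  + move=> t Hst. case: (reach_pt Hpt Hst Hr erefl) => r' [m' [Hr' [<- Hc]]].
    apply/IH => //. exact: H.
  + move=> r' m' Hr' Hc. apply/IH => //. apply: H. exact: (reach_st Hc Hr).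
Qed.

Theorem mainTheorem10 (Ag Pr : finType) (E : env Ag Pr)
  (Sigma : gstrat E -> Prop)
  (Sigma_ok : forall al, Sigma al -> gstrat_ok al)
  (Sigma_ne : exists al, Sigma al)
  (Sigma_restr : restrictable Sigma)
  (Sigma_ext : extendable Sigma) :
  forall (s : St E) (phi : atel Ag Pr),
    (asat Sigma phi s <->
       forall r m, stratspace Sigma r -> g_e (r m) = s ->
         tsat (stratspace Sigma) (transl phi) r m) /\
    (asat Sigma phi s <->
       exists r m, stratspace Sigma r /\ g_e (r m) = s /\
         tsat (stratspace Sigma) (transl phi) r m) /\
    (exists r m, stratspace Sigma r /\ g_e (r m) = s).
Proof.
move=> s phi.
have Hk := key Sigma_ok Sigma_ne Sigma_restr Sigma_ext phi.
have Hpt : exists r m, stratspace Sigma r /\ g_e (r m) = s.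
  case: Sigma_ne => al HS; case: (point_ex (Sigma_ok _ HS) HS s) => r [Hr [Hs _]].
  by exists r, 0.
split; [|split=> //].
- split=> [H r m Hr Hs|H].
  + apply/Hk => //; by rewrite Hs.
  + case: Hpt => r [m [Hr Hs]]. rewrite -Hs; apply/Hk => //. exact: H.
- split=> [H|[r [m [Hr [Hs Ht]]]]].
  + case: Hpt => r [m [Hr Hs]]; exists r, m; do 2 split => //.
    apply/Hk => //; by rewrite Hs.
  + rewrite -Hs; exact/Hk.
Qed.
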